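(* There is an isomorphism of abelian groups \[ C_2^{\rm SLB}(X)\cong\bigoplus_{\substack{a,b,c\in\mathbb Z_p,\ a\ne b,\ b\ne c,\\ (a,b,c,[a,b,c])=\min Q(a,b,c)}}\mathbb Z\big\langle((a,b),(a,c))\big\rangle\ \oplus\bigoplus_{\substack{a,b\in\mathbb Z_p,\ a<b}}\mathbb Z_2\big\langle((a,a),(a,b))\big\rangle, \] and \[ C_1^{\rm SLB}(X)\cong\bigoplus_{\substack{a,b\in\mathbb Z_p,\ a<b}}\mathbb Z\langle(a,b)\rangle\ \oplus\ \bigoplus_{a\in\mathbb Z_p}\mathbb Z_2\langle(a,a)\rangle, \] where $Q(a,b,c)=\{(a,b,c,[a,b,c]),\ (b,a,[a,b,c],c),\ (c,[a,b,c],a,b),\ ([a,b,c],c,b,a)\}\subset\mathbb Z_p^4$, $\mathbb Z\langle x\rangle$ denotes an infinite cyclic group generated by (the class of) $x$ and $\mathbb Z_2\langle x\rangle$ a cyclic group of order $2$ generated by (the class of) $x$.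
   Context: Let $p$ be an odd prime, $X=\mathbb Z_p$, and $[a,b,c]=a-b+c$. Let $\rho((a,b))=(b,a)$, $(a,b)\,\underline{\star}\,(a,c)=(c,[a,b,c])$, $(a,b)\,\overline{\star}\,(a,c)=(c,[a,c,b])$. For $n\ge1$ let $C_n^{\rm lb}(X)$ be the free abelian group on tuples $((a,b_1),\dots,(a,b_n))$, $a,b_i\in X$. Let $D_n^{\rm lb}(X)$ be the subgroup generated by tuples with $b_i=b_{i+1}$ for some $i\in\{1,\dots,n-1\}$, and $D_n^{\rm lb}(X,\rho)$ the subgroup generated by all elements $((a,b_1),\dots,(a,b_n))+((a,b_1)\underline\star(a,b_i),\dots,(a,b_{i-1})\underline\star(a,b_i),\rho((a,b_i)),(a,b_{i+1})\overline\star(a,b_i),\dots,(a,b_n)\overline\star(a,b_i))$, $i\in\{1,\dots,n\}$. Define $C_n^{\rm SLB}(X)=C_n^{\rm lb}(X)/(D_n^{\rm lb}(X)+D_n^{\rm lb}(X,\rho))$. Elements of $\mathbb Z_p$ are represented by the integers $0,1,\dots,p-1$, and $<$ on $\mathbb Z_p$ is the usual order of these representatives; $\mathbb Z_p^4$ is ordered lexicographically: $(a_1,\dots,a_4)<(b_1,\dots,b_4)$ iff $a_j<b_j$ for the least $j$ with $a_j\ne b_j$. $\min Q$ refers to this order. *)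

(* Defs.v *)
From HB Require Import structures.
From mathcomp Require Import all_boot all_order all_algebra.
Set Implicit Arguments.
Unset Strict Implicit.
Unset Printing Implicit Defensive.
Import GRing.Theory.
Local Open Scope ring_scope.

(* X = Z_p, elements represented by ordinals 0..p-1 ('Z_p, p >= 2). *)

Definition tern (p : nat) (a b c : 'Z_p) : 'Z_p := a - b + c.

Definition rho (p : nat) (x : 'Z_p * 'Z_p) : 'Z_p * 'Z_p := (x.2, x.1).
Definition ustar (p : nat) (x y : 'Z_p * 'Z_p) : 'Z_p * 'Z_p :=
  (y.2, tern x.1 x.2 y.2).
Definition ostar (p : nat) (x y : 'Z_p * 'Z_p) : 'Z_p * 'Z_p :=
  (y.2, tern x.1 y.2 x.2).

(* A basis tuple ((a,b_1),...,(a,b_n)) of C_n^lb(X) is encoded as (a, (b_1,...,b_n)). *)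
Definition gen (p n : nat) := ('Z_p * n.-tuple 'Z_p)%type.

Definition lbtuple (p n : nat) (g : gen p n) : n.-tuple ('Z_p * 'Z_p) :=
  map_tuple (fun b => (g.1, b)) g.2.

Definition C (p n : nat) := {ffun gen p n -> int}.

Definition basis (p n : nat) (g : gen p n) : C p n := [ffun h => (h == g)%:R].

Definition degen (p n : nat) (g : gen p n) : bool :=
  [exists i : 'I_n, exists j : 'I_n,
     (nat_of_ord j == (nat_of_ord i).+1)%N && (tnth g.2 i == tnth g.2 j)].

Definition rel_tuple (p n : nat) (g : gen p n) (i : 'I_n) : n.-tuple ('Z_p * 'Z_p) :=
  [tuple (let x := (g.1, tnth g.2 j) in let y := (g.1, tnth g.2 i) in
          if (j < i)%N then ustar x y else if j == i then rho y else ostar x y)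
   | j < n].

(* all its pairs have common first coordinate b_i, so it is the basis tuple: *)
Definition rel_gen (p n : nat) (g : gen p n) (i : 'I_n) : gen p n :=
  (tnth g.2 i, map_tuple snd (rel_tuple g i)).

Lemma rel_genE (p n : nat) (g : gen p n) (i : 'I_n) :
  lbtuple (rel_gen g i) = rel_tuple g i.
Proof.
apply: eq_from_tnth => j; rewrite !tnth_map /= tnth_ord_tuple.
by case: ifP => _ //; case: ifP.
Qed.

Definition inSLBrel (p n : nat) (x : C p n) : Prop :=
  exists (c1 : {ffun gen p n -> int}) (c2 : {ffun (gen p n * 'I_n) -> int}),
    x = \sum_(g | degen g) (basis g) *~ c1 g
        + \sum_(gi : gen p n * 'I_n) (basis gi.1 + basis (rel_gen gi.1 gi.2)) *~ c2 gi.

(* C_n^SLB(X) = C_n^lb / (D + D_rho) is isomorphic to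
   (+)_{g in PI} Z<g> (+) (+)_{g in PJ} Z_2<g>, with the class of g mapped to
   the corresponding generator: a surjective homomorphism with kernel D + D_rho
   sending basis elements to the generators. *)
Definition SLB_iso_gens (p n : nat) (PI PJ : pred (gen p n)) : Prop :=
  exists phi : C p n ->
      ({ffun {g : gen p n | PI g} -> int} * {ffun {g : gen p n | PJ g} -> 'Z_2})%type,
    [/\ {morph phi : x y / x + y},
        forall y, exists x, phi x = y,
        forall x, phi x = 0 <-> inSLBrel x,
        forall i : {g : gen p n | PI g},
          phi (basis (val i)) = ([ffun k => (k == i)%:R], 0) &
        forall j : {g : gen p n | PJ g},
          phi (basis (val j)) = (0, [ffun k => (k == j)%:R])].

Fixpoint lexle (s t : seq nat) : bool :=
  match s, t with
  | x :: s', y :: t' => (x < y)%N || ((x == y) && lexle s' t')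
  | _, _ => true
  end.

Definition quad (p : nat) (a b c d : 'Z_p) : seq nat :=
  [:: nat_of_ord a; nat_of_ord b; nat_of_ord c; nat_of_ord d].

Definition Qset (p : nat) (a b c : 'Z_p) : seq (seq nat) :=
  [:: quad a b c (tern a b c); quad b a (tern a b c) c;
      quad c (tern a b c) a b; quad (tern a b c) c b a].

Definition is_minQ (v : seq nat) (Q : seq (seq nat)) : bool :=
  (v \in Q) && all (lexle v) Q.

Definition I2 (p : nat) : pred (gen p 2) := fun g =>
  let a := g.1 in let b := tnth g.2 ord0 in let c := tnth g.2 ord_max in
  [&& a != b, b != c & is_minQ (quad a b c (tern a b c)) (Qset a b c)].

Definition J2 (p : nat) : pred (gen p 2) := fun g =>
  let a := g.1 in let b := tnth g.2 ord0 in let c := tnth g.2 ord_max in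
  (b == a) && (nat_of_ord a < nat_of_ord c)%N.

Definition I1 (p : nat) : pred (gen p 1) := fun g =>
  (nat_of_ord g.1 < nat_of_ord (tnth g.2 ord0))%N.

Definition J1 (p : nat) : pred (gen p 1) := fun g => tnth g.2 ord0 == g.1.

Arguments I2 p : clear implicits.
Arguments J2 p : clear implicits.
Arguments I1 p : clear implicits.
Arguments J1 p : clear implicits.

(* Main.v *)
Require Import Defs.
From mathcomp Require Import all_boot all_order all_algebra.
From mathcomp Require Import ring.
Set Implicit Arguments.
Unset Strict Implicit.
Unset Printing Implicit Defensive.
Import GRing.Theory.
Local Open Scope ring_scope.

Section Abstract.
Variables (p n : nat) (PI PJ : pred (gen p n)).
Local Notation T := ({ffun {g : gen p n | PI g} -> int} * {ffun {g : gen p n | PJ g} -> 'Z_2})%type.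
Local Notation R := (@inSLBrel p n).

Lemma R0 : R 0.
Proof.
exists 0, 0; rewrite !big1 ?addr0 // => g _; by rewrite ffunE mulr0z.
Qed.

Lemma RD x y : R x -> R y -> R (x + y).
Proof.
case=> c1 [c2 ->] [d1 [d2 ->]]; exists (c1 + d1), (c2 + d2).
rewrite addrACA -!big_split /=; congr (_ + _); apply: eq_bigr => g _;
by rewrite ffunE mulrzDr.
Qed.

Lemma RN x : R x -> R (- x).
Proof.
case=> c1 [c2 ->]; exists (- c1), (- c2).
rewrite opprD -!sumrN; congr (_ + _); apply: eq_bigr => g _;
by rewrite ffunE mulrNz.
Qed.

Lemma RB x y : R x -> R y -> R (x - y).
Proof. by move=> hx hy; apply: RD => //; apply: RN. Qed.

Lemma Rsum (I : Type) (r : seq I) (P : pred I) (F : I -> C p n) :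
  (forall i, P i -> R (F i)) -> R (\sum_(i <- r | P i) F i).
Proof. by move=> h; apply: big_ind => //; [apply: R0 | apply: RD]. Qed.

Lemma RMn x k : R x -> R (x *+ k).
Proof. by move=> h; elim: k => [|k IH]; [rewrite mulr0n; apply: R0 | rewrite mulrS; apply: RD]. Qed.

Lemma RMz x k : R x -> R (x *~ k).
Proof. by move=> h; case: k => k; [apply: RMn | apply: RN; apply: RMn]. Qed.

Lemma Rdeg g : degen g -> R (basis g).
Proof.
move=> hg; exists [ffun h => (h == g)%:R], 0.
rewrite [X in _ + X]big1 ?addr0; last by move=> gi _; rewrite ffunE mulr0z.
rewrite (bigD1 g) //= ffunE eqxx mulr1z big1 ?addr0 // => h /andP [_ hh].
by rewrite ffunE (negbTE hh) mulr0z.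
Qed.

Lemma Rrel g i : R (basis g + basis (rel_gen g i)).
Proof.
exists 0, [ffun gi => (gi == (g, i))%:R].
rewrite big1; last by move=> h _; rewrite ffunE mulr0z.
rewrite add0r (bigD1 (g, i)) //= ffunE eqxx mulr1z big1 ?addr0 // => h hh.
by rewrite ffunE (negbTE hh) mulr0z.
Qed.

Lemma fstD (x y : T) : (x + y).1 = x.1 + y.1. Proof. by []. Qed.
Lemma sndD (x y : T) : (x + y).2 = x.2 + y.2. Proof. by []. Qed.

Lemma fst_mulrn (x : T) k : (x *+ k).1 = x.1 *+ k.
Proof. by elim: k => [|k IH]; rewrite ?mulr0n // !mulrS /= IH. Qed.
Lemma snd_mulrn (x : T) k : (x *+ k).2 = x.2 *+ k.
Proof. by elim: k => [|k IH]; rewrite ?mulr0n // !mulrS /= IH. Qed.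
Lemma fst_mulrz (x : T) k : (x *~ k).1 = x.1 *~ k.
Proof. by case: k => k; rewrite /= fst_mulrn. Qed.
Lemma snd_mulrz (x : T) k : (x *~ k).2 = x.2 *~ k.
Proof. by case: k => k; rewrite /= snd_mulrn. Qed.
Lemma fst_sum (I : Type) (r : seq I) (P : pred I) (F : I -> T) :
  (\sum_(i <- r | P i) F i).1 = \sum_(i <- r | P i) (F i).1.
Proof. by apply: (big_morph (fun x : T => x.1)). Qed.
Lemma snd_sum (I : Type) (r : seq I) (P : pred I) (F : I -> T) :
  (\sum_(i <- r | P i) F i).2 = \sum_(i <- r | P i) (F i).2.
Proof. by apply: (big_morph (fun x : T => x.2)). Qed.


Variable f : gen p n -> T.

Definition phi (x : C p n) : T :=
  (\sum_g (f g).1 *~ x g, \sum_g (f g).2 *~ x g).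

Lemma phiD x y : phi (x + y) = phi x + phi y.
Proof.
rewrite /phi; congr (_, _); rewrite -big_split; apply: eq_bigr => g _;
by rewrite ffunE mulrzDr.
Qed.

Lemma phi0 : phi 0 = 0.
Proof. by rewrite /phi; congr (_, _); apply: big1 => g _; rewrite ffunE mulr0z. Qed.

Lemma phiN x : phi (- x) = - phi x.
Proof. by apply/eqP; rewrite -subr_eq0 opprK -phiD addNr phi0. Qed.

Lemma phiMn x k : phi (x *+ k) = phi x *+ k.
Proof. by elim: k => [|k IH]; rewrite ?mulr0n ?phi0 // !mulrS phiD IH. Qed.

Lemma phiMz x k : phi (x *~ k) = phi x *~ k.
Proof. by case: k => k; rewrite /= ?phiN phiMn. Qed.

Lemma phi_sum (I : Type) (r : seq I) (P : pred I) (F : I -> C p n) :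
  phi (\sum_(i <- r | P i) F i) = \sum_(i <- r | P i) phi (F i).
Proof. by apply: (big_morph phi phiD phi0). Qed.

Lemma phi_basis h : phi (basis h) = f h.
Proof.
rewrite /phi [f h]surjective_pairing; congr (_, _);
rewrite (bigD1 h) //= ffunE eqxx mulr1z big1 ?addr0 // => g hg;
by rewrite ffunE (negbTE hg) mulr0z.
Qed.

Definition L (y : T) : C p n :=
  \sum_(i : {g : gen p n | PI g}) basis (val i) *~ y.1 i
  + \sum_(j : {g : gen p n | PJ g}) basis (val j) *+ (nat_of_ord (y.2 j)).

Lemma L0 : L 0 = 0.
Proof.
by rewrite /L !big1 ?addr0 // => i _; rewrite ffunE ?mulr0z ?mulr0n.
Qed.

Hypothesis h2 : forall j : {g : gen p n | PJ g}, R (basis (val j) *+ 2).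

Lemma LD y z : R (L y + L z - L (y + z)).
Proof.
rewrite /L /=.
have -> : \sum_(i : {g : gen p n | PI g}) basis (val i) *~ (y.1 + z.1) i =
  \sum_(i : {g : gen p n | PI g}) basis (val i) *~ y.1 i +
  \sum_(i : {g : gen p n | PI g}) basis (val i) *~ z.1 i.
  by rewrite -big_split; apply: eq_bigr => i _; rewrite ffunE mulrzDr.
set A1 := \sum_(i : _) _ *~ y.1 i; set A2 := \sum_(i : _) _ *~ z.1 i.
rewrite (addrACA A1) opprD (addrACA (A1 + A2)) subrr add0r -!big_split /= -sumrN -big_split /=.
apply: Rsum => j _; rewrite ffunE.
set u := nat_of_ord (y.2 j); set v := nat_of_ord (z.2 j).
have -> : nat_of_ord (y.2 j + z.2 j) = ((u + v) %% 2)%N by [].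
rewrite -mulrnDr {1}(divn_eq (u + v) 2) mulrnDr addrK mulnC mulrnA.
exact: (RMn _ (h2 j)).
Qed.

Lemma P_all x : (forall g, R (basis g - L (f g))) -> R (x - L (phi x)).
Proof.
move=> hl.
have PD a b : R (a - L (phi a)) -> R (b - L (phi b)) -> R (a + b - L (phi (a + b))).
  move=> ha hb; rewrite phiD.
  have -> : a + b - L (phi a + phi b) =
     (a - L (phi a)) + (b - L (phi b)) + (L (phi a) + L (phi b) - L (phi a + phi b)).
    set u := L (phi a); set v := L (phi b); set w := L (phi a + phi b).
    by rewrite [in RHS](addrACA a) -opprD subrKA.
  by apply: RD; [apply: RD | apply: LD].
have PN a : R (a - L (phi a)) -> R (- a - L (phi (- a))).
  move=> ha; rewrite phiN.
  have := LD (phi a) (- phi a); rewrite subrr L0 subr0 => hh.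
  have -> : - a - L (- phi a) = - (a - L (phi a)) - (L (phi a) + L (- phi a)).
    set u := L (phi a); set v := L (- phi a).
    by rewrite [in RHS]opprB [in RHS]opprD (addrACA u) subrr add0r.
  by apply: RB => //; apply: RN.
have P0 : R (0 - L (phi 0)) by rewrite phi0 L0 subrr; apply: R0.
have PMz a k : R (a - L (phi a)) -> R (a *~ k - L (phi (a *~ k))).
  move=> ha; have Pn m : R (a *+ m - L (phi (a *+ m))).
    by elim: m => [|m IH]; rewrite ?mulr0n // mulrS; apply: PD.
  by case: k => k; [exact: Pn | exact: (PN _ (Pn k.+1))].
have -> : x = \sum_g basis g *~ x g.
  apply/ffunP => h; rewrite sum_ffunE (bigD1 h) //= big1 ?addr0.
    by rewrite ffunMzE ffunE eqxx intz.
  by move=> g hg; rewrite ffunMzE ffunE eq_sym (negbTE hg) mul0rz.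
apply: (big_ind (fun a => R (a - L (phi a)))) => //.
move=> g _; apply: PMz; rewrite phi_basis; exact: hl.
Qed.


Lemma abstract_iso :
  (forall i : {g : gen p n | PI g}, f (val i) = ([ffun k => (k == i)%:R], 0)) ->
  (forall j : {g : gen p n | PJ g}, f (val j) = (0, [ffun k => (k == j)%:R])) ->
  (forall g, degen g -> f g = 0) ->
  (forall g i, f (rel_gen g i) = - f g) ->
  (forall g, R (basis g - L (f g))) ->
  SLB_iso_gens PI PJ.
Proof.
move=> hI hJ hdeg hrel hl; exists phi; split.
- exact: phiD.
- move=> y; exists (L y); apply: injective_projections.
  + rewrite /L phiD fstD !phi_sum !fst_sum.
    rewrite [X in _ + X = _]big1; last first.
      by move=> j _; rewrite phiMn fst_mulrn phi_basis hJ /= mul0rn.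
    rewrite addr0; apply/ffunP => k; rewrite sum_ffunE (bigD1 k) // big1 ?addr0.
      by rewrite phiMz fst_mulrz phi_basis hI /= ffunMzE ffunE eqxx intz ?addr0.
    by move=> i hi; rewrite phiMz fst_mulrz phi_basis hI /= ffunMzE ffunE eq_sym (negbTE hi) mul0rz.
  + rewrite /L phiD sndD !phi_sum !snd_sum.
    rewrite [X in X + _ = _]big1; last first.
      by move=> j _; rewrite phiMz snd_mulrz phi_basis hI /= mul0rz.
    rewrite add0r; apply/ffunP => k; rewrite sum_ffunE (bigD1 k) // big1 ?addr0.
      by rewrite phiMn snd_mulrn phi_basis hJ /= ffunMnE ffunE eqxx natr_Zp ?addr0.
    by move=> i hi; rewrite phiMn snd_mulrn phi_basis hJ /= ffunMnE ffunE eq_sym (negbTE hi) mul0rn.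
- move=> x; split.
  + by move=> h0; have := P_all x hl; rewrite h0 L0 subr0.
  + case=> c1 [c2 ->]; rewrite phiD !phi_sum big1 ?add0r; first apply: big1.
      by move=> gi _; rewrite phiMz phiD !phi_basis hrel subrr mul0rz.
    by move=> g hg; rewrite phiMz phi_basis hdeg // mul0rz.
- by move=> i; rewrite phi_basis hI.
- by move=> j; rewrite phi_basis hJ.
Qed.

End Abstract.

Section Helpers.
Variables (p n : nat) (PI PJ : pred (gen p n)).

Definition eI (h : gen p n) : {ffun {g : gen p n | PI g} -> int} :=
  [ffun k => (val k == h)%:R].
Definition eJ (h : gen p n) : {ffun {g : gen p n | PJ g} -> 'Z_2} :=
  [ffun k => (val k == h)%:R].
Definition tI h := if PI h then eI h else 0.
Definition tJ h := if PJ h then eJ h else 0.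

Lemma eI_val (i : {g : gen p n | PI g}) : eI (val i) = [ffun k => (k == i)%:R].
Proof. by apply/ffunP => k; rewrite !ffunE val_eqE. Qed.
Lemma eJ_val (i : {g : gen p n | PJ g}) : eJ (val i) = [ffun k => (k == i)%:R].
Proof. by apply/ffunP => k; rewrite !ffunE val_eqE. Qed.

Lemma LIz h s : PI h -> @L p n PI PJ (eI h *~ s, 0) = basis h *~ s.
Proof.
move=> hh; rewrite /L [X in _ + X]big1 ?addr0; last by move=> j _; rewrite ffunE mulr0n.
rewrite (bigD1 (exist _ h hh)) //= big1 ?addr0.
  by rewrite ffunMzE ffunE eqxx intz.
move=> k hk; rewrite ffunMzE ffunE.
have -> : (sval k == h) = false.
  apply/negbTE; apply: contra hk => /eqP e; apply/eqP; apply: val_inj => /=; exact: e.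
by rewrite mul0rz mulr0z.
Qed.

Lemma LJ h : PJ h -> @L p n PI PJ (0, eJ h) = basis h.
Proof.
move=> hh; rewrite /L big1 ?add0r; last by move=> j _; rewrite ffunE mulr0z.
rewrite (bigD1 (exist _ h hh)) //= big1 ?addr0.
  by rewrite ffunE eqxx.
move=> k hk; rewrite ffunE.
have -> : (sval k == h) = false.
  apply/negbTE; apply: contra hk => /eqP e; apply/eqP; apply: val_inj => /=; exact: e.
by rewrite mulr0n.
Qed.

Lemma Z2_opp (x : {ffun {g : gen p n | PJ g} -> 'Z_2}) : - x = x.
Proof. by apply/ffunP => k; rewrite ffunE; apply: val_inj; case: (x k) => [[|[|m]] // hm]. Qed.

End Helpers.

Section N1.
Variable p : nat.
Local Notation PI := (I1 p).
Local Notation PJ := (J1 p).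

Definition mk1 (a b : 'Z_p) : gen p 1 := (a, [tuple b]).

Lemma t1 (b : 'Z_p) : tnth [tuple b] ord0 = b. Proof. by []. Qed.

Lemma I1E a b : PI (mk1 a b) = (nat_of_ord a < nat_of_ord b)%N. Proof. by []. Qed.
Lemma J1E a b : PJ (mk1 a b) = (b == a). Proof. by []. Qed.

Lemma elim1 (P : gen p 1 -> Prop) : (forall a b, P (mk1 a b)) -> forall g, P g.
Proof.
move=> h [a t]; have -> : t = [tuple tnth t ord0].
  by apply: eq_from_tnth => i; rewrite ord1.
exact: h.
Qed.

Lemma rel1 a b : rel_gen (mk1 a b) ord0 = mk1 b a.
Proof.
rewrite /rel_gen /=; congr pair; apply: eq_from_tnth => i.
by rewrite (ord1 i) !tnth_map tnth_ord_tuple.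
Qed.

Definition f1 (g : gen p 1) :=
  let a := g.1 in let b := tnth g.2 ord0 in
  (tI PI (mk1 a b) - tI PI (mk1 b a), tJ PJ (mk1 a b)).

Lemma f1E a b : f1 (mk1 a b) = (tI PI (mk1 a b) - tI PI (mk1 b a), tJ PJ (mk1 a b)).
Proof. by []. Qed.

Lemma neqZ (a b : 'Z_p) : (nat_of_ord a < nat_of_ord b)%N -> (b == a) = false.
Proof. by move=> h; apply/eqP => e; move: h; rewrite e ltnn. Qed.
Lemma neqZ' (a b : 'Z_p) : (nat_of_ord a < nat_of_ord b)%N -> (a == b) = false.
Proof. by move=> h; apply/eqP => e; move: h; rewrite e ltnn. Qed.

Lemma iso1 : SLB_iso_gens PI PJ.
Proof.
apply: (@abstract_iso p 1 PI PJ f1).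
- move=> [g]; elim/elim1: g => a b /=; rewrite J1E => /eqP ->.
  by rewrite mulr2n; have := Rrel (mk1 a a) ord0; rewrite rel1.
- move=> [g]; elim/elim1: g => a b hg /=; rewrite f1E /tI /tJ hg.
  have -> : PI (mk1 b a) = false by rewrite I1E ltnNge ltnW.
  have -> : PJ (mk1 a b) = false by rewrite J1E neqZ.
  by rewrite subr0 (eI_val (exist _ (mk1 a b) hg)).
- move=> [g]; elim/elim1: g => a b hg /=; rewrite f1E.
  have e : b = a by move: (hg); rewrite J1E => /eqP.
  have -> : mk1 b a = mk1 a b by rewrite e.
  by rewrite subrr /tJ hg (eJ_val (exist (fun g => PJ g) (mk1 a b) hg)).
- elim/elim1 => a b; rewrite /degen => /existsP [i /existsP [j]].
  by rewrite !ord1.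
- elim/elim1 => a b i; rewrite ord1 rel1 !f1E.
  congr (_, _); first by rewrite opprB.
  change (tJ PJ (mk1 b a) = - tJ PJ (mk1 a b)).
  rewrite /tJ !J1E; case: (eqVneq a b) => [->|hab]; first by rewrite Z2_opp.
  by rewrite oppr0.
- elim/elim1 => a b; rewrite f1E /tI /tJ /I1 J1E.
  case: (ltngtP (nat_of_ord a) (nat_of_ord b)) => hab.
  + rewrite (neqZ hab) subr0 -[eI _ _](mulr1z) LIz // mulr1z subrr; exact: R0.
  + rewrite (neqZ' hab) sub0r -mulrN1z LIz // mulrN1z opprK.
    by have := Rrel (mk1 a b) ord0; rewrite rel1.
  + have e : a = b by apply: val_inj.
    rewrite -e eqxx subrr LJ ?J1E // subrr; exact: R0.
Qed.

End N1.

Local Open Scope ring_scope.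

Section Lex.
Local Open Scope nat_scope.
Lemma lexle_refl s : lexle s s.
Proof. elim: s => [|x s IH] //=; by rewrite eqxx ltnn IH. Qed.

Lemma lexle_total s t : lexle s t || lexle t s.
Proof.
elim: s t => [|x s IH] [|y t] //=.
case: (ltngtP x y) => h //=.
Qed.

Lemma lexle_trans s t u : size s = size t -> size t = size u ->
  lexle s t -> lexle t u -> lexle s u.
Proof.
elim: s t u => [|x s IH] [|y t] [|z u] //= [hst] [htu].
move=> /orP [h1 | /andP [/eqP e1 h1]] /orP [h2 | /andP [/eqP e2 h2]].
- by rewrite (ltn_trans h1 h2).
- by rewrite -e2 h1.
- by rewrite e1 h2.
- by rewrite e1 e2 eqxx (IH t u) ?orbT.
Qed.

Lemma lexle_anti s t : size s = size t -> lexle s t -> lexle t s -> s = t.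
Proof.
elim: s t => [|x s IH] [|y t] //= [hst].
case: (ltngtP x y) => h //= h1 h2.
by rewrite h (IH t).
Qed.

Lemma ex_min (s : seq (seq nat)) k : s != [::] -> all (fun v => size v == k) s ->
  exists2 v, v \in s & all (lexle v) s.
Proof.
elim: s => // x s IH _ /= /andP [/eqP hx hs].
case: (eqVneq s [::]) => [-> | sn].
  by exists x; rewrite ?mem_head //= lexle_refl.
have [v vs hv] := IH sn hs.
have sv : size v = k by move/allP: hs => /(_ v vs) /eqP.
case hxv: (lexle x v).
  exists x; first exact: mem_head.
  rewrite /= lexle_refl /=; apply/allP => w ws.
  have sw : size w = k by move/allP: hs => /(_ w ws) /eqP.
  apply: (lexle_trans (t := v)); [by rewrite hx sv | by rewrite sv sw | by [] | by move/allP: hv; apply].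
exists v; first by rewrite inE vs orbT.
rewrite /= hv andbT; have := lexle_total x v; by rewrite hxv.
Qed.

End Lex.

Section N2.
Variable p : nat.
Hypothesis hp1 : (1 < p)%N.
Hypothesis hodd : odd p.
Local Notation PI := (I2 p).
Local Notation PJ := (J2 p).

Definition mk (a b c : 'Z_p) : gen p 2 := (a, [tuple b; c]).

Lemma elim2 (P : gen p 2 -> Prop) : (forall a b c, P (mk a b c)) -> forall g, P g.
Proof.
move=> h [a t]; have -> : t = [tuple tnth t ord0; tnth t ord_max].
  by apply: eq_from_tnth => -[[|[|i]] hi] //=; congr tnth; apply: val_inj.
exact: h.
Qed.

Lemma I2E a b c : PI (mk a b c) =
  [&& a != b, b != c & is_minQ (quad a b c (tern a b c)) (Qset a b c)].
Proof. by []. Qed.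
Lemma J2E a b c : PJ (mk a b c) = (b == a) && (nat_of_ord a < nat_of_ord c)%N.
Proof. by []. Qed.

Lemma rel0 a b c : rel_gen (mk a b c) ord0 = mk b a (tern a b c).
Proof.
rewrite /rel_gen /=; congr pair; apply: eq_from_tnth => -[[|[|i]] hi] //; by rewrite !tnth_map tnth_ord_tuple /= !(tnth_nth a).
Qed.
Lemma relM a b c : rel_gen (mk a b c) ord_max = mk c (tern a b c) a.
Proof.
rewrite /rel_gen /=; congr pair; apply: eq_from_tnth => -[[|[|i]] hi] //; by rewrite !tnth_map tnth_ord_tuple /= !(tnth_nth a).
Qed.

Lemma tA (a b c : 'Z_p) : tern b a (tern a b c) = c.
Proof. rewrite /tern; ring. Qed.
Lemma tB (a b c : 'Z_p) : tern c (tern a b c) a = b.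
Proof. rewrite /tern; ring. Qed.
Lemma tC (a b c : 'Z_p) : tern (tern a b c) c b = a.
Proof. rewrite /tern; ring. Qed.
Lemma tD (a c : 'Z_p) : tern a a c = c.
Proof. rewrite /tern; ring. Qed.
Lemma tE (a b c : 'Z_p) : (tern a b c == c) = (a == b).
Proof. by rewrite /tern -subr_eq0 addrK subr_eq0. Qed.


Lemma tF (a b c : 'Z_p) : (tern a b c == a) = (b == c).
Proof. by rewrite /tern -addrA addrC -subr_eq0 addrK addrC subr_eq0 eq_sym. Qed.

Lemma two_eq (x y : 'Z_p) : x + x = y + y -> x = y.
Proof.
move=> h; apply/eqP; rewrite -subr_eq0; set d := x - y.
have d2 : d *+ 2 = 0.
  by rewrite /d mulr2n addrACA -opprD h subrr.
have dp : d *+ p = 0 by rewrite -mulr_natr (pchar_Zp hp1) mulr0.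
have e : p.+1 = (2 * (p.+1)./2)%N.
  by rewrite mulnC muln2 -{1}(odd_double_half p.+1) /= hodd.
have -> : d = d *+ p.+1 by rewrite mulrS dp addr0.
by rewrite e mulrnA d2 mul0rn.
Qed.

Lemma mk_inj x y z x' y' z' : mk x y z = mk x' y' z' -> [/\ x = x', y = y' & z = z'].
Proof.
move=> e; split; [exact: (congr1 fst e) | exact: (congr1 (fun g => tnth g.2 ord0) e)
  | exact: (congr1 (fun g => tnth g.2 ord_max) e)].
Qed.

Definition O3 (a b c : 'Z_p) := [:: mk a b c; mk b a (tern a b c);
  mk c (tern a b c) a; mk (tern a b c) c b].

Lemma distO a b c : a != b -> b != c ->
  let t := tern a b c in
  [/\ mk b a t != mk a b c, mk c t a != mk a b c, mk t c b != mk a b c &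
      [/\ mk c t a != mk b a t, mk t c b != mk b a t & mk t c b != mk c t a]].
Proof.
move=> ab bc.
have key : forall (a b c : 'Z_p), a = c -> b = tern a b c -> a = b.
  move=> x y z -> e; apply: two_eq; symmetry.
  by rewrite {1}e /tern; ring.
have n01 : (mk a b c == mk b a (tern a b c)) = false.
  by apply/eqP => /mk_inj [e _ _]; move/eqP: ab.
have n02 : (mk a b c == mk c (tern a b c) a) = false.
  by apply/eqP => /mk_inj [e1 e2 _]; move/eqP: ab; apply; apply: (key a b c).
have n03 : (mk a b c == mk (tern a b c) c b) = false.
  by apply/eqP => /mk_inj [_ e _]; move/eqP: bc.
have n12 : (mk b a (tern a b c) == mk c (tern a b c) a) = false.
  by apply/eqP => /mk_inj [e _ _]; move/eqP: bc.
have n13 : (mk b a (tern a b c) == mk (tern a b c) c b) = false.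
  by apply/eqP => /mk_inj [e1 e2 _]; move/eqP: ab; apply; apply: (key a b c).
have n23 : (mk c (tern a b c) a == mk (tern a b c) c b) = false.
  apply/eqP => /mk_inj [e _ _]; move/eqP: e; rewrite eq_sym tE => /eqP e.
  by move/eqP: ab.
rewrite /=; split; [by rewrite eq_sym n01|by rewrite eq_sym n02|by rewrite eq_sym n03|].
by split; [rewrite eq_sym n12|rewrite eq_sym n13|rewrite eq_sym n23].
Qed.




Definition qd (h : gen p 2) := quad h.1 (tnth h.2 ord0) (tnth h.2 ord_max)
  (tern h.1 (tnth h.2 ord0) (tnth h.2 ord_max)).
Lemma qdE a b c : qd (mk a b c) = quad a b c (tern a b c).
Proof. by []. Qed.

Lemma QsetO (a b c : 'Z_p) : Qset a b c = map qd (O3 a b c).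
Proof. by rewrite /O3 /= !qdE tA tB tC. Qed.

Lemma pA (T : eqType) (x0 x1 x2 x3 : T) : [:: x1; x0; x3; x2] =i [:: x0; x1; x2; x3].
Proof. by move=> y; rewrite !inE; case: (y == x0); case: (y == x1); case: (y == x2); case: (y == x3). Qed.
Lemma pB (T : eqType) (x0 x1 x2 x3 : T) : [:: x2; x3; x0; x1] =i [:: x0; x1; x2; x3].
Proof. by move=> y; rewrite !inE; case: (y == x0); case: (y == x1); case: (y == x2); case: (y == x3). Qed.
Lemma pC (T : eqType) (x0 x1 x2 x3 : T) : [:: x3; x2; x1; x0] =i [:: x0; x1; x2; x3].
Proof. by move=> y; rewrite !inE; case: (y == x0); case: (y == x1); case: (y == x2); case: (y == x3). Qed.

Lemma QsA (a b c : 'Z_p) : Qset b a (tern a b c) =i Qset a b c.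
Proof. by rewrite /Qset tA; apply: pA. Qed.
Lemma QsB (a b c : 'Z_p) : Qset c (tern a b c) a =i Qset a b c.
Proof. by rewrite /Qset tB; apply: pB. Qed.
Lemma QsC (a b c : 'Z_p) : Qset (tern a b c) c b =i Qset a b c.
Proof. by rewrite /Qset tC; apply: pC. Qed.

Lemma PIgen (x y z a b c : 'Z_p) : x != y -> y != z -> Qset x y z =i Qset a b c ->
  PI (mk x y z) = all (lexle (qd (mk x y z))) (map qd (O3 a b c)).
Proof.
move=> h1 h2 hQ; rewrite I2E h1 h2 !andTb /is_minQ {1}/Qset mem_head andTb.
by rewrite (eq_all_r hQ) QsetO.
Qed.

Lemma PI_O a b c : a != b -> b != c -> forall h, h \in O3 a b c ->
  PI h = all (lexle (qd h)) (map qd (O3 a b c)).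
Proof.
move=> ab bc h; rewrite !inE => /or4P [] /eqP ->.
- by apply: PIgen.
- by apply: PIgen; [rewrite eq_sym | rewrite eq_sym tF | exact: QsA].
- by apply: PIgen; [rewrite eq_sym tE | rewrite tF | exact: QsB].
- by apply: PIgen; [rewrite tE | rewrite eq_sym | exact: QsC].
Qed.

Lemma ex_PI a b c : a != b -> b != c -> exists2 h, h \in O3 a b c & PI h.
Proof.
move=> ab bc.
have [v vin hv] := @ex_min (map qd (O3 a b c)) 4 isT isT.
move/mapP: vin => [h hin hh]; exists h => //.
by rewrite (PI_O ab bc hin) -hh.
Qed.

Lemma qd_inj h h' : qd h = qd h' -> h = h'.
Proof.
elim/elim2: h => a b c; elim/elim2: h' => a' b' c'; rewrite !qdE.
by case=> /val_inj -> /val_inj -> /val_inj ->.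
Qed.

Lemma uniq_PI a b c h h' : a != b -> b != c -> h \in O3 a b c -> h' \in O3 a b c ->
  PI h -> PI h' -> h = h'.
Proof.
move=> ab bc hin hin'; rewrite (PI_O ab bc hin) (PI_O ab bc hin') => /allP H /allP H'.
apply: qd_inj; apply: lexle_anti.
- by elim/elim2: h {H H' hin} => *; elim/elim2: h' {hin'} => *.
- by apply: H; apply: map_f.
- by apply: H'; apply: map_f.
Qed.

Lemma notPI a b c h h' : a != b -> b != c -> h \in O3 a b c -> h' \in O3 a b c ->
  PI h -> h' != h -> PI h' = false.
Proof.
move=> ab bc hin hin' hP hne; apply/negbTE; apply: contra hne => hP'.
by apply/eqP; apply: (uniq_PI ab bc).
Qed.


Definition f2 (g : gen p 2) :=
  let a := g.1 in let b := tnth g.2 ord0 in let c := tnth g.2 ord_max in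
  let t := tern a b c in
  (tI PI (mk a b c) - tI PI (mk b a t) - tI PI (mk c t a) + tI PI (mk t c b),
   tJ PJ (mk a b c) + tJ PJ (mk c t a)).

Lemma f2E a b c : let t := tern a b c in f2 (mk a b c) =
  (tI PI (mk a b c) - tI PI (mk b a t) - tI PI (mk c t a) + tI PI (mk t c b),
   tJ PJ (mk a b c) + tJ PJ (mk c t a)).
Proof. by []. Qed.

Lemma tI_true h : PI h -> tI PI h = eI PI h.
Proof. by rewrite /tI => ->. Qed.
Lemma tI_false h : PI h = false -> tI PI h = 0.
Proof. by rewrite /tI => ->. Qed.
Lemma tJ_false h : PJ h = false -> tJ PJ h = 0.
Proof. by rewrite /tJ => ->. Qed.
Lemma tJ_true h : PJ h -> tJ PJ h = eJ PJ h.
Proof. by rewrite /tJ => ->. Qed.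

Lemma inO0 a b c : mk a b c \in O3 a b c. Proof. by rewrite !inE eqxx. Qed.
Lemma inO1 a b c : mk b a (tern a b c) \in O3 a b c. Proof. by rewrite !inE eqxx ?orbT. Qed.
Lemma inO2 a b c : mk c (tern a b c) a \in O3 a b c. Proof. by rewrite !inE eqxx ?orbT. Qed.
Lemma inO3 a b c : mk (tern a b c) c b \in O3 a b c. Proof. by rewrite !inE eqxx ?orbT. Qed.

Lemma f2_nd a b c : a != b -> b != c ->
  inSLBrel (basis (mk a b c) - L (f2 (mk a b c))).
Proof.
move=> ab bc; have [h hin hP] := ex_PI ab bc.
have [d01 d02 d03 [d12 d13 d23]] := distO ab bc.
rewrite f2E /=.
rewrite (tJ_false (h := mk a b c)); last by rewrite J2E eq_sym (negbTE ab).
rewrite (tJ_false (h := mk c _ a)); last by rewrite J2E tE (negbTE ab).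
rewrite addr0.
have NP := notPI ab bc.
move: hin; rewrite !inE => /or4P [] /eqP E; subst h.
- rewrite (tI_true hP) (tI_false (NP _ _ (inO0 _ _ _) (inO1 _ _ _) hP d01)).
  rewrite (tI_false (NP _ _ (inO0 _ _ _) (inO2 _ _ _) hP d02)).
  rewrite (tI_false (NP _ _ (inO0 _ _ _) (inO3 _ _ _) hP d03)).
  rewrite !subr0 addr0 -[eI _ _]mulr1z LIz // mulr1z subrr; exact: R0.
- rewrite (tI_true hP) (tI_false (NP _ _ (inO1 _ _ _) (inO0 _ _ _) hP _)); last by rewrite eq_sym.
  rewrite (tI_false (NP _ _ (inO1 _ _ _) (inO2 _ _ _) hP d12)).
  rewrite (tI_false (NP _ _ (inO1 _ _ _) (inO3 _ _ _) hP d13)).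
  rewrite sub0r !subr0 addr0 -mulrN1z LIz // mulrN1z opprK.
  by have := Rrel (mk a b c) ord0; rewrite rel0.
- rewrite (tI_true hP) (tI_false (NP _ _ (inO2 _ _ _) (inO0 _ _ _) hP _)); last by rewrite eq_sym.
  rewrite (tI_false (NP _ _ (inO2 _ _ _) (inO1 _ _ _) hP _)); last by rewrite eq_sym.
  rewrite (tI_false (NP _ _ (inO2 _ _ _) (inO3 _ _ _) hP d23)).
  rewrite subr0 sub0r addr0 -mulrN1z LIz // mulrN1z opprK.
  by have := Rrel (mk a b c) ord_max; rewrite relM.
- rewrite (tI_true hP) (tI_false (NP _ _ (inO3 _ _ _) (inO0 _ _ _) hP _)); last by rewrite eq_sym.
  rewrite (tI_false (NP _ _ (inO3 _ _ _) (inO1 _ _ _) hP _)); last by rewrite eq_sym.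
  rewrite (tI_false (NP _ _ (inO3 _ _ _) (inO2 _ _ _) hP _)); last by rewrite eq_sym.
  rewrite !subr0 add0r -[eI _ _]mulr1z LIz // mulr1z.
  have -> : basis (mk a b c) - basis (mk (tern a b c) c b) =
    (basis (mk a b c) + basis (mk c (tern a b c) a))
    - (basis (mk c (tern a b c) a) + basis (mk (tern a b c) c b)).
    by rewrite opprD addrA addrK.
  apply: RB; first by have := Rrel (mk a b c) ord_max; rewrite relM.
  by have := Rrel (mk c (tern a b c) a) ord0; rewrite rel0 tB.
Qed.


Lemma ZA (V : zmodType) (x0 x1 x2 x3 : V) : x1 - x0 - x3 + x2 = - (x0 - x1 - x2 + x3).
Proof. by rewrite !opprD !opprK [in LHS](addrC x1) [in LHS]addrAC. Qed.
Lemma ZB (V : zmodType) (x0 x1 x2 x3 : V) : x2 - x3 - x0 + x1 = - (x0 - x1 - x2 + x3).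
Proof. by rewrite !opprD !opprK [in LHS]addrAC [in LHS]addrC [x2 - x3 + x1]addrAC [x2 + x1]addrC !addrA. Qed.

Lemma tBB (a b : 'Z_p) : tern a b b = a.
Proof. rewrite /tern; ring. Qed.

Lemma f2_deg a b : f2 (mk a b b) = 0.
Proof.
rewrite f2E /= tBB.
rewrite (tI_false (h := mk a b b)); last by rewrite I2E eqxx /= andbF.
rewrite (tI_false (h := mk b a a)); last by rewrite I2E eqxx /= andbF.
rewrite (tJ_false (h := mk a b b)); last by rewrite J2E; case: eqP => // ->; rewrite ltnn.
rewrite (tJ_false (h := mk b a a)); last by rewrite J2E; case: eqP => // ->; rewrite ltnn.
by rewrite !subr0 !addr0.
Qed.

Lemma f2_aac a c : f2 (mk a a c) = (0, tJ PJ (mk a a c) + tJ PJ (mk c c a)).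
Proof.
rewrite f2E /= tD.
rewrite (tI_false (h := mk a a c)); last by rewrite I2E eqxx.
rewrite (tI_false (h := mk c c a)); last by rewrite I2E eqxx.
by rewrite !subr0 addr0.
Qed.

Lemma pairN (x : {ffun {g : gen p 2 | PI g} -> int}) (y : {ffun {g : gen p 2 | PJ g} -> 'Z_2}) :
  - (x, y) = (- x, - y).
Proof. by []. Qed.

Lemma iso2 : SLB_iso_gens PI PJ.
Proof.
apply: (@abstract_iso p 2 PI PJ f2).
- move=> [g]; elim/elim2: g => a b c hg /=.
  move: hg; rewrite J2E => /andP [/eqP -> _].
  by rewrite mulr2n; have := Rrel (mk a a c) ord0; rewrite rel0 tD.
- move=> [g]; elim/elim2: g => a b c hg /=.
  have /and3P [ab bc _] := hg.
  have [d01 d02 d03 _] := distO ab bc.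
  have NP := notPI ab bc.
  rewrite f2E /= (tI_true hg).
  rewrite (tI_false (NP _ _ (inO0 _ _ _) (inO1 _ _ _) hg d01)).
  rewrite (tI_false (NP _ _ (inO0 _ _ _) (inO2 _ _ _) hg d02)).
  rewrite (tI_false (NP _ _ (inO0 _ _ _) (inO3 _ _ _) hg d03)).
  rewrite (tJ_false (h := mk a b c)); last by rewrite J2E eq_sym (negbTE ab).
  rewrite (tJ_false (h := mk c _ a)); last by rewrite J2E tE (negbTE ab).
  by rewrite !subr0 !addr0 (eI_val (exist (fun g => PI g) (mk a b c) hg)).
- move=> [g]; elim/elim2: g => a b c hg /=.
  have /andP [ba ac] := hg.
  rewrite f2E /=.
  rewrite (tI_false (h := mk a b c)); last by rewrite I2E eq_sym ba.
  rewrite (tI_false (h := mk b a _)); last by rewrite I2E ba.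
  rewrite (tI_false (h := mk c _ a)); last by rewrite I2E eq_sym tE eq_sym ba.
  rewrite (tI_false (h := mk _ c b)); last by rewrite I2E tE eq_sym ba.
  rewrite (tJ_true hg) (tJ_false (h := mk c _ a)); last first.
    by rewrite J2E ltnNge ltnW // andbF.
  by rewrite !subr0 !addr0 (eJ_val (exist (fun g => PJ g) (mk a b c) hg)).
- elim/elim2 => a b c; rewrite /degen => /existsP [i /existsP [j /andP [/eqP hij hb]]].
  case: i hij hb => [[|[|i]] hi] //; case: j => [[|[|j]] hj] // _.
  by rewrite !(tnth_nth a) /= => /eqP <-; rewrite f2_deg.
- elim/elim2 => a b c [[|[|i]] hi] //.
  + have -> : Ordinal hi = ord0 by apply: val_inj.
    rewrite rel0 !f2E /= tA pairN; congr (_, _); first by rewrite ZA.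
    rewrite Z2_opp; case: (eqVneq a b) => [<- | ab]; first by rewrite tD.
    rewrite (tJ_false (h := mk a b c)); last by rewrite J2E eq_sym (negbTE ab).
    rewrite (tJ_false (h := mk c _ a)); last by rewrite J2E tE (negbTE ab).
    rewrite (tJ_false (h := mk b a _)); last by rewrite J2E (negbTE ab).
    rewrite (tJ_false (h := mk _ c b)); last by rewrite J2E eq_sym tE (negbTE ab).
    by [].
  + have -> : Ordinal hi = ord_max by apply: val_inj.
    rewrite relM !f2E /= tB pairN; congr (_, _); first by rewrite ZB.
    by rewrite Z2_opp addrC.
- elim/elim2 => a b c.
  case: (eqVneq b c) => [<- | bc].
    rewrite f2_deg L0 subr0; apply: Rdeg.
    by apply/existsP; exists ord0; apply/existsP; exists ord_max; rewrite /= !(tnth_nth a).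
  case: (eqVneq a b) => [e | ab]; last exact: f2_nd.
  subst b.
  have ac := bc.
  rewrite f2_aac.
  case: (ltngtP (nat_of_ord a) (nat_of_ord c)) => h.
  + rewrite (tJ_true (h := mk a a c)); last by rewrite J2E eqxx h.
    rewrite (tJ_false (h := mk c c a)); last by rewrite J2E eqxx ltnNge ltnW.
    rewrite addr0 LJ; last by rewrite J2E eqxx h.
    by rewrite subrr; apply: R0.
  + rewrite (tJ_false (h := mk a a c)); last by rewrite J2E eqxx ltnNge ltnW.
    rewrite (tJ_true (h := mk c c a)); last by rewrite J2E eqxx h.
    rewrite add0r LJ; last by rewrite J2E eqxx h.
    have -> : basis (mk a a c) - basis (mk c c a) =
      (basis (mk a a c) + basis (mk c c a)) - basis (mk c c a) *+ 2.
      by rewrite mulr2n opprD addrA addrK.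
    apply: RB; first by have := Rrel (mk a a c) ord_max; rewrite relM tD.
    by rewrite mulr2n; have := Rrel (mk c c a) ord0; rewrite rel0 tD.
  + by have e : a = c := val_inj h; move: ac; rewrite e eqxx.
Qed.

End N2.

Theorem lemma3p2 (p : nat) (hp : prime p) (hodd : odd p) :
  SLB_iso_gens (I2 p) (J2 p) /\ SLB_iso_gens (I1 p) (J1 p).
Proof.
split; first exact: (@iso2 p (prime_gt1 hp) hodd).
exact: iso1.
Qed.
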